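(* Let $R = R_1\times\cdots\times R_t$ be a finite commutative ring with identity, where each $R_i$ is a local ring. Then the involutory Cayley graph $\Gamma(R)$ is connected if and only if at most one of the factors $R_i$ has even order, that factor (if it exists) has connected involutory Cayley graph $\Gamma(R_i)$, and every other factor $R_j$ is isomorphic to $\mathbb{Z}_{p_j^{n_j}}$ for some odd prime $p_j$ and positive integer $n_j$.
   Context: All rings are finite, commutative, with nonzero identity. An element $u$ of a ring $R$ is an involution if $u^2=1$; $\mathrm{Inv}(R)$ denotes the set of involutions. The involutory Cayley graph $\Gamma(R)$ is the simple undirected graph with vertex set $R$ in which distinct $x,y$ are adjacent iff $(x-y)^2=1$, i.e. the Cayley graph of $(R,+)$ with respect to $\mathrm{Inv}(R)$; it is $|\mathrm{Inv}(R)|$-regular. *)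

(* Defs.v *)
From HB Require Import structures.
From mathcomp Require Import all_boot all_order all_algebra.
Set Implicit Arguments. Unset Strict Implicit. Unset Printing Implicit Defensive.
Import GRing.Theory.
Local Open Scope ring_scope.

Definition involution (R : comNzRingType) (u : R) : bool := u ^+ 2 == 1.

Definition inv_cayley_rel (R : finComNzRingType) : rel R :=
  fun x y => (x != y) && involution (x - y).

Definition gamma_connected (R : finComNzRingType) : Prop :=
  forall x y : R, connect (@inv_cayley_rel R) x y.

Definition is_ideal (R : finComNzRingType) (I : {set R}) : Prop :=
  [/\ 0 \in I,
      forall x y, x \in I -> y \in I -> x - y \in I
    & forall r x, x \in I -> r * x \in I].

Definition is_maximal_ideal (R : finComNzRingType) (M : {set R}) : Prop :=
  [/\ is_ideal M, (1 \notin M)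
    & forall J : {set R}, is_ideal J -> M \subset J -> J = M \/ 1 \in J].

Definition local_ring (R : finComNzRingType) : Prop :=
  exists M : {set R}, is_maximal_ideal M /\
    forall N : {set R}, is_maximal_ideal N -> N = M.

Definition ring_iso (R S : finComNzRingType) : Prop :=
  exists f : {rmorphism R -> S}, bijective f.

(* R is (isomorphic to) the product of the R_ i, via the projections pi i:
   the map x |-> (pi i x)_i is a bijective ring morphism onto the product. *)
Definition is_product_via (R : finComNzRingType) (t : nat)
    (R_ : 'I_t -> finComNzRingType) (pi : forall i, {rmorphism R -> R_ i}) : Prop :=
  (forall x y : R, (forall i, pi i x = pi i y) -> x = y) /\
  (forall y : forall i, R_ i, exists x : R, forall i, pi i x = y i).

(* Main.v *)
Require Import Defs.
From HB Require Import structures.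
From mathcomp Require Import all_boot all_order all_algebra all_fingroup all_solvable.
From mathcomp Require Import ring zify.
Set Implicit Arguments. Unset Strict Implicit. Unset Printing Implicit Defensive.
Import GRing.Theory FinRing.Theory.
Local Open Scope ring_scope.

Section Basics.
Variable R : finComNzRingType.

Definition unitb (x : R) := [exists y, x * y == 1].

Lemma unitbP x : reflect (exists y, x * y = 1) (unitb x).
Proof. by apply: (iffP existsP) => [[y /eqP]|[y h]]; exists y => //; apply/eqP. Qed.

Lemma unitbMl x y : unitb (x * y) -> unitb x.
Proof. by move/unitbP=> [z h]; apply/unitbP; exists (y * z); rewrite mulrA. Qed.

Lemma unitb1 : unitb 1.
Proof. by apply/unitbP; exists 1; rewrite mulr1. Qed.

Lemma unitb_inj x : (forall y, x * y = 0 -> y = 0) -> unitb x.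
Proof.
move=> h; have inj : injective (fun y => x * y).
  by move=> a b e; apply/eqP; rewrite -subr_eq0; apply/eqP/h; rewrite mulrBr e subrr.
have [g _ gK] := injF_bij inj.
by apply/unitbP; exists (g 1); rewrite gK.
Qed.

Lemma unitb_zd x y : unitb x -> x * y = 0 -> y = 0.
Proof. by move=> /unitbP[z h] e; rewrite -[y]mul1r -h mulrAC e mul0r. Qed.

Lemma odd_unit2 : odd #|R| -> unitb 2.
Proof.
move=> oR; apply: unitb_inj => y e; apply/eqP; apply/negPn/negP => ny.
have y2 : (y ^+ 2)%g = 1%g by rewrite zmodXgE zmod1gE -mulr_natl.
have d2 : (#[y]%g %| 2)%N by rewrite order_dvdn y2.
have dG : (#[y]%g %| #|[set: R]|)%N by apply: order_dvdG; rewrite inE.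
rewrite cardsT in dG.
have : #[y]%g != 1%N by rewrite order_eq1.
have le2 := dvdn_leq (isT : (0 < 2)%N) d2.
move: le2 dG; case: #[y]%g => [|[|[|k]]] //= _.
  by rewrite dvd0n => /eqP h; rewrite h in oR.
by rewrite dvdn2 oR.
Qed.

Lemma even_nonunit2 : ~~ odd #|R| -> ~~ unitb 2.
Proof.
move=> eR; have d : (2 %| #|[set: R]|)%N by rewrite cardsT dvdn2.
have [y _ oy] := Cauchy (isT : prime 2) d.
have y2 : y *+ 2 = 0 by rewrite -zmodXgE -oy expg_order.
have ny : y != 0 by apply/eqP => y0; move: oy; rewrite y0 -zmod1gE order1.
apply/negP => u; move/eqP: ny; apply.
by apply: (unitb_zd u); rewrite mulr_natl.
Qed.

Definition idealb (I : {set R}) :=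
  [&& 0 \in I, [forall x, forall y, (x \in I) ==> (y \in I) ==> (x - y \in I)]
    & [forall r, forall x, (x \in I) ==> (r * x \in I)]].

Lemma idealbP I : reflect (is_ideal I) (idealb I).
Proof.
apply: (iffP and3P) => [[h0 /forallP hs /forallP hm]|[h0 hs hm]]; split=> //.
- by move=> x y xI yI; move: (hs x) => /forallP /(_ y); rewrite xI yI.
- by move=> r x xI; move: (hm r) => /forallP /(_ x); rewrite xI.
- by apply/forallP=> x; apply/forallP=> y; apply/implyP=> xI; apply/implyP=> yI; apply: hs.
- by apply/forallP=> r; apply/forallP=> x; apply/implyP=> xI; apply: hm.
Qed.

Lemma nonunit_in_max x : ~~ unitb x -> exists N, is_maximal_ideal N /\ x \in N.
Proof.
move=> nx; pose I0 := [set x * r | r : R].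
pose cand J := [&& idealb J, I0 \subset J & 1 \notin J].
have cI0 : cand I0.
  apply/and3P; split=> //.
  - apply/idealbP; split.
    + by apply/imsetP; exists 0; rewrite ?mulr0.
    + move=> a b /imsetP[r _ ->] /imsetP[s _ ->]; apply/imsetP; exists (r - s) => //.
      by rewrite mulrBr.
    + move=> a b /imsetP[r _ ->]; apply/imsetP; exists (a * r) => //.
      by rewrite mulrCA.
  - apply/negP=> /imsetP[r _ e]; move/negP: nx; apply; apply/unitbP; by exists r.
case: (@arg_maxnP _ I0 cand (fun J : {set R} => #|J|) cI0) => N /and3P[/idealbP iN sN n1N] maxN.
exists N; split; last first.
  by apply: (subsetP sN); apply/imsetP; exists 1; rewrite ?mulr1.
split=> // J iJ sNJ; case: (boolP (1 \in J)) => [|n1J]; [by right|left].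
have cJ : cand J by apply/and3P; split => //; [exact/idealbP|exact: subset_trans sNJ].
apply/eqP; rewrite eq_sym eqEcard sNJ /=; exact: maxN.
Qed.

Lemma local_M : local_ring R ->
  exists M : {set R}, is_ideal M /\ forall x, (x \in M) = ~~ unitb x.
Proof.
move=> [M [[iM n1M maxM] uM]]; exists M; split => // x.
apply/idP/idP => [xM|nx].
  apply/negP=> /unitbP[y e]; move/negP: n1M; apply.
  by case: iM => _ _ /(_ y x xM); rewrite mulrC e.
by have [N [mN xN]] := nonunit_in_max nx; rewrite -(uM N mN).
Qed.

End Basics.

Lemma unitbM (R : finComNzRingType) (x y : R) : unitb x -> unitb y -> unitb (x * y).
Proof.
move=> /unitbP[a ha] /unitbP[b hb]; apply/unitbP; exists (a * b).
by rewrite mulrACA ha hb mulr1.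
Qed.

Section Local.
Variable R : finComNzRingType.
Hypothesis loc : local_ring R.

Lemma local_odd_inv (u : R) : odd #|R| -> involution u -> u = 1 \/ u = -1.
Proof.
move=> oR /eqP u2; have [M [[h0 hs hm] hM]] := local_M loc.
have e : (u - 1) * (u + 1) = 0 by rewrite mulrDr mulr1 mulrBl mul1r -expr2 u2 addrA subrK subrr.
case: (boolP (unitb (u - 1))) => [un|].
  by right; apply/eqP; rewrite -addr_eq0; apply/eqP; apply: unitb_zd un e.
case: (boolP (unitb (u + 1))) => [un|].
  by left; apply/eqP; rewrite -subr_eq0; apply/eqP; apply: unitb_zd un _; rewrite mulrC.
rewrite -!hM => a b; have := hs _ _ a b.
have -> : u + 1 - (u - 1) = 2 by ring. rewrite hM.
by rewrite (odd_unit2 oR).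
Qed.

Lemma local_even_inv (u : R) : ~~ odd #|R| -> involution u -> ~~ unitb (u - 1).
Proof.
move=> eR /eqP u2; apply/negP => un.
have : unitb ((u - 1) * (u - 1)) by apply: unitbM.
have -> : (u - 1) * (u - 1) = 2 * (1 - u).
  rewrite -expr2; have -> : (u - 1) ^+ 2 = u ^+ 2 - 2 * u + 1 by ring.
  by rewrite u2; ring.
by move/unitbMl; apply/negP; apply: even_nonunit2.
Qed.
End Local.

Definition Gen (R : finComNzRingType) := forall P : R -> Prop, P 0 ->
  (forall z u, P z -> involution u -> P (z + u)) -> forall z, P z.

Lemma involution_neq0 (R : finComNzRingType) (u : R) : involution u -> u != 0.
Proof. by move=> /eqP u2; apply/eqP => u0; move: u2; rewrite u0 expr0n /= => /eqP; rewrite eq_sym oner_eq0. Qed.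

Lemma gen_connected R : Gen R -> gamma_connected R.
Proof.
move=> g x y; have -> : y = x + (y - x) by rewrite addrC subrK.
apply: (g (fun z => connect (@inv_cayley_rel R) x (x + z))).
  by rewrite addr0 connect0.
move=> z u h iu; apply: connect_trans h _; apply: connect1.
rewrite /inv_cayley_rel /involution; apply/andP; split.
  rewrite -subr_eq0; have -> : x + z - (x + (z + u)) = - u by ring.
  by rewrite oppr_eq0 involution_neq0.
have -> : x + z - (x + (z + u)) = - u by ring.
by rewrite sqrrN.
Qed.

Lemma connected_gen R : gamma_connected R -> Gen R.
Proof.
move=> c P P0 PS z; have /connectP[p pp ->] := c 0 z.
elim: p 0 P0 pp => [|b p IH] a Pa //= /andP[/andP[_ iab] pp].
apply: IH pp; have -> : b = a + (- (a - b)) by rewrite opprB addrC subrK.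
by apply: PS => //; rewrite /involution sqrrN.
Qed.

Lemma char_exists (S : finComNzRingType) : exists N, (0 < N)%N && (N%:R == 0 :> S).
Proof.
pose f (k : 'I_(#|S|.+1)) : S := (k : nat)%:R.
have : ~~ injectiveb f.
  apply/negP => /injectiveP inj; have := leq_card f inj.
  by rewrite card_ord ltnn.
move/injectivePn => [a [b nab fab]].
have key : forall a b : 'I_(#|S|.+1), (a < b)%N -> f a = f b -> exists N, (0 < N)%N && (N%:R == 0 :> S).
  move=> x y lxy e; exists (y - x)%N; rewrite subn_gt0 lxy /=.
  by rewrite natrB ?(ltnW lxy) // -/(f y) -/(f x) e subrr.
case: (ltngtP a b) => h; [exact: key h fab | exact: key h (esym fab) |].
by move/val_inj: h => h; rewrite h eqxx in nab.
Qed.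

Lemma char_prop (S : finComNzRingType) :
  exists m, (0 < m)%N /\ forall k, (k%:R == 0 :> S) = (m %| k)%N.
Proof.
case: (ex_minnP (char_exists S)) => m /andP[m0 /eqP mR] mmin.
exists m; split=> // k.
rewrite {1}(divn_eq k m) natrD natrM mR mulr0 add0r.
apply/idP/idP => [h|].
  unfold dvdn; case: (posnP (k %% m)%N) => [//|kp].
  have := mmin _ (introT andP (conj kp h)).
  by rewrite leqNgt ltn_pmod.
by unfold dvdn => /eqP ->.
Qed.

Section Iso.
Variable S : finComNzRingType.
Variable m : nat.
Hypothesis m_gt1 : (1 < m)%N.
Hypothesis charm : forall k : nat, (k%:R == 0 :> S) = (m %| k)%N.
Hypothesis cyc : forall z : S, exists k : nat, z == k%:R.

Let pE : (Zp_trunc m).+2 = m. Proof. exact: Zp_cast. Qed.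

Lemma natr_modm k : ((k %% m)%N%:R : S) = k%:R.
Proof.
have mR : (m%:R : S) = 0 by apply/eqP; rewrite charm.
by rewrite {2}(divn_eq k m) natrD natrM mR mulr0 add0r.
Qed.

Definition toS (x : 'Z_m) : S := (x : nat)%:R.

Lemma toS_inj : injective toS.
Proof.
have key : forall a b : 'Z_m, (a <= b)%N -> toS a = toS b -> a = b.
  move=> a b lab e; apply/val_inj/eqP; rewrite eqn_leq lab /=.
  have : ((b - a)%N%:R == 0 :> S) by rewrite natrB // -/(toS b) -/(toS a) e subrr.
  rewrite charm => d; rewrite -subn_eq0; apply/eqP.
  apply/eqP; rewrite -[_ == 0]negbK -lt0n; apply/negP => h.
  have := dvdn_leq h d; rewrite leqNgt; move/negP; apply.
  by apply: leq_ltn_trans (leq_subr _ _) _; rewrite -{2}pE ltn_ord.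
move=> a b e; case: (leqP a b) => h; first exact: key.
by symmetry; apply: key (ltnW h) (esym e).
Qed.

Let modE k : (k %% (Zp_trunc m).+2)%N = (k %% m)%N. Proof. by rewrite pE. Qed.

Lemma toSD x y : toS (x + y) = toS x + toS y.
Proof. by rewrite /toS -natrD -(natr_modm (x + y)%N) -modE. Qed.

Lemma toSM x y : toS (x * y) = toS x * toS y.
Proof. by rewrite /toS -natrM -(natr_modm (x * y)%N) -modE. Qed.

Lemma toS1 : toS 1 = 1.
Proof. by rewrite /toS -natr_modm -modE. Qed.

Lemma toS0 : toS 0 = 0.
Proof. by []. Qed.

Lemma toSN x : toS (- x) = - toS x.
Proof. by apply/eqP; rewrite -addr_eq0 -toSD addNr. Qed.

Definition ofS (z : S) : 'Z_m := inZp (xchoose (cyc z)).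

Lemma ofSK : cancel ofS toS.
Proof.
move=> z; rewrite /toS /ofS /= modE natr_modm.
by apply/esym/eqP; exact: (xchooseP (cyc z)).
Qed.

Lemma toSK : cancel toS ofS.
Proof. by move=> x; apply: toS_inj; rewrite ofSK. Qed.

Lemma ofS_zmod : zmod_morphism ofS.
Proof. by move=> x y; apply: toS_inj; rewrite toSD toSN !ofSK. Qed.

Lemma ofS_monoid : monoid_morphism ofS.
Proof.
split; first by apply: toS_inj; rewrite ofSK toS1.
by move=> x y; apply: toS_inj; rewrite toSM !ofSK.
Qed.

HB.instance Definition _ := GRing.isZmodMorphism.Build S 'Z_m ofS ofS_zmod.
HB.instance Definition _ := GRing.isMonoidMorphism.Build S 'Z_m ofS ofS_monoid.

Lemma iso_Zm : ring_iso S 'Z_m.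
Proof. by exists ofS; exists toS; [exact: ofSK | exact: toSK]. Qed.

End Iso.

Lemma odd_local_cyclic (S : finComNzRingType) : local_ring S -> odd #|S| -> Gen S ->
  exists p n : nat, [/\ prime p, odd p, (0 < n)%N & ring_iso S 'Z_(p ^ n)].
Proof.
move=> loc oS g.
have [N /andP[N0 /eqP NR]] := char_exists S.
have cyc : forall z : S, exists k : nat, z == k%:R.
  apply: g => [|z u [k /eqP ->] iu]; first by exists 0%N.
  case: (local_odd_inv loc oS iu) => ->; first by exists k.+1; rewrite natr1.
  exists (k + N.-1)%N; rewrite natrD.
  have -> : (N.-1%:R : S) = -1.
    by apply/eqP; rewrite -addr_eq0 natr1 prednK // NR.
  by [].
have [m [m0 charm]] := char_prop S.
have m1 : (1 < m)%N.
  case: m m0 charm => [|[|m]] //= _ ch.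
  by move: (ch 1%N); rewrite dvdn1 eqxx oner_eq0.
have om : odd m.
  apply/negPn/negP => em.
  have h2 := even_halfK em.
  have : ((m./2)%:R : S) = 0.
    apply: (unitb_zd (odd_unit2 oS)); rewrite -natrM; apply/eqP; rewrite charm.
    by rewrite mul2n h2.
  move/eqP; rewrite charm => /dvdn_leq h; rewrite -addnn in h2.
  have h3 : (0 < m./2)%N by lia.
  by move: (h h3); lia.


pose p := pdiv m.
have pp : prime p := pdiv_prime m1.
have pd : (p %| m)%N := pdiv_dvd m.
have [a ea] : exists a, a = (m`_p)%N by exists (m`_p)%N.
have [b eb] : exists b, b = (m`_p^')%N by exists (m`_p^')%N.
have mab : (a * b)%N = m by rewrite ea eb partnC.
have cab : coprime a b by rewrite ea eb coprime_partC.
have lg : (0 < logn p m)%N by rewrite logn_gt0 mem_primes pp m0 pd.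
have a1 : (1 < a)%N.
  rewrite ea p_part; apply: leq_trans (prime_gt1 pp) _.
  by rewrite -{1}(expn1 p) leq_pexp2l // prime_gt0.
have b1 : b = 1%N.
  apply/eqP; rewrite eqn_leq; apply/andP; split; last by rewrite eb part_gt0.
  rewrite leqNgt; apply/negP => b1.
  have [M [[h0 hs hm] hM]] := local_M loc.
  pose e := chinese a b 1 0.
  have ea1 : (e %% a)%N = 1%N by rewrite /e chinese_modl // modn_small.
  have eb0 : (b %| e)%N by rewrite /dvdn /e chinese_modr // mod0n.
  have e1 : (1 <= e)%N by case: (e) ea1 => //; rewrite mod0n.
  have ad : (a %| e - 1)%N by rewrite -eqn_mod_dvd // ea1 modn_small.
  pose x : S := e%:R.
  have ex : x * (x - 1) = 0.
    have -> : x * (x - 1) = (e * (e - 1))%N%:R by rewrite natrM natrB.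
    apply/eqP; rewrite charm -mab Gauss_dvd // dvdn_mull //.
    by rewrite dvdn_mulr.
  have nx : ~~ unitb x.
    apply/negP => ux; have := unitb_zd ux ex; move/eqP.
    rewrite -(natrB _ e1) charm => d.
    have : (b %| e - (e - 1))%N by rewrite dvdn_sub // (dvdn_trans _ d) // -mab dvdn_mull.
    by rewrite subKn // dvdn1 => /eqP bb; rewrite bb in b1.
  have nx1 : ~~ unitb (x - 1).
    apply/negP => ux; have : (x - 1) * x = 0 by rewrite mulrC.
    move/(unitb_zd ux)/eqP; rewrite charm => d.
    have : (a %| e - (e - 1))%N by rewrite dvdn_sub // (dvdn_trans _ d) // -mab dvdn_mulr.
    by rewrite subKn // dvdn1 => /eqP aa; rewrite aa in a1.
  rewrite -!hM in nx nx1; have := hs _ _ nx nx1.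
  by rewrite opprB addrC subrK hM unitb1.
have mp : m = (p ^ logn p m)%N by rewrite -p_part -ea -mab b1 muln1.
exists p, (logn p m); split=> //; first exact: dvdn_odd pd om.
rewrite -mp; exact: iso_Zm.
Qed.

Section Prod.
Variables (R : finComNzRingType) (t : nat) (R_ : 'I_t -> finComNzRingType).
Variable pi : forall i, {rmorphism R -> R_ i}.
Hypothesis prod : is_product_via pi.

Definition upd (y : forall k, R_ k) (i : 'I_t) (w : R_ i) : forall k, R_ k :=
  fun k => match i =P k with ReflectT e => eq_rect i R_ w k e | ReflectF _ => y k end.
Arguments upd y i w k : clear implicits.

Lemma upd_same y i w : upd y i w i = w.
Proof.
rewrite /upd; case: (i =P i) => [e|]; last by [].
by rewrite (eq_irrelevance e (erefl i)).
Qed.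

Lemma upd_other y i w k : i != k -> upd y i w k = y k.
Proof. by rewrite /upd; case: (i =P k) => // ->; rewrite eqxx. Qed.

Lemma pi_inj x y : (forall i, pi i x = pi i y) -> x = y.
Proof. exact: prod.1. Qed.

Lemma surjb (y : forall k, R_ k) : exists x, [forall k, pi k x == y k].
Proof. by have [x h] := prod.2 y; exists x; apply/forallP => k; rewrite h. Qed.

Definition lift y := xchoose (surjb y).

Lemma liftE y k : pi k (lift y) = y k.
Proof. by have /forallP/(_ k)/eqP := xchooseP (surjb y). Qed.

Lemma inv_pi k x : involution x -> involution (pi k x).
Proof. by move=> /eqP h; rewrite /involution -rmorphXn h rmorph1. Qed.

Lemma inv_lift y : (forall k, involution (y k)) -> involution (lift y).
Proof.
move=> h; apply/eqP/pi_inj => k; rewrite rmorphXn liftE rmorph1; apply/eqP; exact: h.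
Qed.

Lemma gen_factor : Gen R -> forall i, Gen (R_ i).
Proof.
move=> g i P P0 PS w.
have := g (fun z => P (pi i z)) _ _ (lift (upd (fun k => 0) i w)).
rewrite liftE upd_same; apply; first by rewrite rmorph0.
by move=> z u h iu; rewrite rmorphD; apply: PS => //; exact: inv_pi.
Qed.

Lemma ideal_add (S : finComNzRingType) (M : {set S}) x y :
  is_ideal M -> x \in M -> y \in M -> x + y \in M.
Proof.
move=> [h0 hs _] xM yM; have := hs _ _ xM (hs _ _ h0 yM).
by rewrite sub0r opprK.
Qed.

Lemma even_step (S : finComNzRingType) (M : {set S}) (a u : S) :
  is_ideal M -> (forall x, (x \in M) = ~~ unitb x) -> local_ring S -> ~~ odd #|S| ->
  involution u -> ((a \in M) -> (a + u - 1 \in M)) /\ ((a - 1 \in M) -> (a + u \in M)).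
Proof.
move=> iM hM loc eS iu.
have u1 : u - 1 \in M by rewrite hM; exact: local_even_inv.
have two : 2 \in M by rewrite hM; exact: even_nonunit2.
have [h0 hs _] := iM.
split => aM.
  have -> : a + u - 1 = a + (u - 1) by ring.
  exact: ideal_add.
have -> : a + u = (a - 1) + ((u - 1) + 2) by ring.
by apply: ideal_add => //; apply: ideal_add.
Qed.

Hypothesis loc : forall i, local_ring (R_ i).

Lemma two_even : Gen R -> forall i j, ~~ odd #|R_ i| -> ~~ odd #|R_ j| -> i = j.
Proof.
move=> g i j ei ej; apply/eqP/negPn/negP => nij.
have [Mi [iMi hMi]] := local_M (loc i).
have [Mj [iMj hMj]] := local_M (loc j).
pose Q z := (pi i z \in Mi /\ pi j z \in Mj) \/ (pi i z - 1 \in Mi /\ pi j z - 1 \in Mj).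
have Qall : forall z, Q z.
  apply: g; first by left; rewrite !rmorph0; case: iMi; case: iMj.
  move=> z u [[a b]|[a b]] iu; rewrite /Q !rmorphD.
    right; split.
      by case: (even_step (pi i z) iMi hMi (loc i) ei (inv_pi i iu)) => + _; apply.
    by case: (even_step (pi j z) iMj hMj (loc j) ej (inv_pi j iu)) => + _; apply.
  left; split.
    by case: (even_step (pi i z) iMi hMi (loc i) ei (inv_pi i iu)) => _; apply.
  by case: (even_step (pi j z) iMj hMj (loc j) ej (inv_pi j iu)) => _; apply.
have := Qall (lift (upd (fun k => 0) i 1)).
rewrite /Q !liftE upd_same upd_other // hMi hMj unitb1 sub0r.
case=> [[//]|[_]]; rewrite hMj; apply/negP/negPn/unitbP; exists (-1); by rewrite mulrNN mulr1.
Qed.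


Lemma decomp x : x = \sum_(k < t) lift (upd (fun l => 0) k (pi k x)).
Proof.
apply: pi_inj => l; rewrite rmorph_sum (bigD1 l) //= liftE upd_same big1 ?addr0 //.
by move=> k nkl; rewrite liftE upd_other // eq_sym.
Qed.

Lemma lift_upd0D i (a b : R_ i) :
  lift (upd (fun l => 0) i (a + b)) = lift (upd (fun l => 0) i a) + lift (upd (fun l => 0) i b).
Proof.
apply: pi_inj => l; rewrite rmorphD !liftE; case: (eqVneq i l) => [<-|nil].
  by rewrite !upd_same.
by rewrite !upd_other // addr0.
Qed.

Lemma lift_upd00 i : lift (upd (fun l => 0) i (0 : R_ i)) = 0.
Proof.
apply: pi_inj => l; rewrite rmorph0 liftE; case: (eqVneq i l) => [<-|nil].
  by rewrite upd_same.
by rewrite upd_other.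
Qed.

Lemma suff_gen :
  (forall i j, ~~ odd #|R_ i| -> ~~ odd #|R_ j| -> i = j) ->
  (forall i, ~~ odd #|R_ i| -> Gen (R_ i)) ->
  (forall j, odd #|R_ j| -> forall w : R_ j, exists k : nat, w = k%:R) ->
  Gen R.
Proof.
move=> H1 H2 H3 P P0 PS.
pose W z := forall x, P x -> P (x + z).
have W0 : W 0 by move=> x; rewrite addr0.
have WD : forall a b, W a -> W b -> W (a + b) by move=> a b wa wb x px; rewrite addrA; auto.
have WI : forall u, involution u -> W u by move=> u iu x px; exact: PS.
have WMn : forall a n, W a -> W (a *+ n).
  by move=> a n wa; elim: n => [|n IH]; [rewrite mulr0n | rewrite mulrS; apply: WD].
have [N /andP[N0 /eqP NR]] := char_exists R.
have WN : forall a, W a -> W (- a).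
  move=> a wa; have -> : - a = a *+ N.-1.
    apply/eqP; rewrite eq_sym -addr_eq0 -mulrSr prednK // -mulr_natr NR mulr0 //.
  exact: WMn.
have WB : forall a b, W a -> W b -> W (a - b) by move=> a b wa wb; apply: WD => //; apply: WN.
have Wsum : forall (F : 'I_t -> R), (forall k, W (F k)) -> W (\sum_(k < t) F k).
  by move=> F h; apply: (big_ind W) => //.
have Wodd : forall j, odd #|R_ j| -> forall w : R_ j, W (lift (upd (fun l => 0) j w)).
  move=> j oj.
  have [c hc] : exists c : nat, 2 * c%:R = 1 :> R_ j.
    have /unitbP[y hy] := odd_unit2 oj; have [c ec] := H3 j oj y; by exists c; rewrite -ec.
  pose b := lift (upd (fun l => 1) j (-1)).
  have ib : involution b by apply: inv_lift => k; case: (eqVneq j k) => [<-|njk];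
     rewrite ?upd_same ?upd_other // /involution ?sqrrN expr1n.
  have e : lift (upd (fun l => 0) j 1) = (1 - b) *+ c.
    apply: pi_inj => l; rewrite rmorphMn rmorphB rmorph1 !liftE.
    case: (eqVneq j l) => [<-|njl]; last by rewrite !upd_other // subrr mul0rn.
    by rewrite !upd_same opprK -mulr_natr -mulr2n.
  have We : W (lift (upd (fun l => 0) j 1)).
    by rewrite e; apply: WMn; apply: WB; [apply: WI; rewrite /involution expr1n | exact: WI].
  move=> w; have [k ->] := H3 j oj w.
  have -> : lift (upd (fun l => 0) j k%:R) = lift (upd (fun l => 0) j 1) *+ k.
    apply: pi_inj => l; rewrite rmorphMn !liftE.
    case: (eqVneq j l) => [<-|njl]; last by rewrite !upd_other // mul0rn.
    by rewrite !upd_same.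
  exact: WMn.
have Weven : forall i, ~~ odd #|R_ i| -> forall w : R_ i, W (lift (upd (fun l => 0) i w)).
  move=> i ei; apply: (H2 i ei); first by rewrite lift_upd00.
  move=> w u hw iu; rewrite lift_upd0D; apply: WD => //.
  pose F := lift (upd (fun l => 1) i u).
  have iF : involution F by apply: inv_lift => k; case: (eqVneq i k) => [<-|nik];
     rewrite ?upd_same ?upd_other // /involution expr1n.
  pose G := lift (upd (fun l => 1) i 0).
  have -> : lift (upd (fun l => 0) i u) = F - G.
    apply: pi_inj => l; rewrite rmorphB !liftE.
    case: (eqVneq i l) => [<-|nil]; last by rewrite !upd_other // subrr.
    by rewrite !upd_same subr0.
  apply: WB; first exact: WI.
  rewrite (decomp G); apply: Wsum => k.
  case: (eqVneq i k) => [<-|nik].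
    by rewrite liftE upd_same lift_upd00.
  case: (boolP (odd #|R_ k|)) => ok; first exact: Wodd.
  by move: nik; rewrite (H1 _ _ ei ok) eqxx.
move=> z; have := W0 _ P0 => _.
rewrite -[z]add0r; apply: (_ : W z) => //.
rewrite (decomp z); apply: Wsum => k.
by case: (boolP (odd #|R_ k|)) => ok; [exact: Wodd | exact: Weven].
Qed.

End Prod.

Theorem mainTheorem1 (R : finComNzRingType) (t : nat)
    (R_ : 'I_t -> finComNzRingType) (pi : forall i, {rmorphism R -> R_ i}) :
  is_product_via pi ->
  (forall i, local_ring (R_ i)) ->
  (gamma_connected R <->
   [/\ forall i j : 'I_t, ~~ odd #|{: R_ i}| -> ~~ odd #|{: R_ j}| -> i = j,
       forall i : 'I_t, ~~ odd #|{: R_ i}| -> gamma_connected (R_ i)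
     & forall j : 'I_t, odd #|{: R_ j}| ->
         exists p n : nat, [/\ prime p, odd p, (0 < n)%N
                             & ring_iso (R_ j) 'Z_(p ^ n)]]).
Proof.
move=> prod loc; split.
  move=> /connected_gen g; split.
  - exact: two_even prod loc g.
  - by move=> i _; apply: gen_connected; exact: gen_factor prod g i.
  - move=> j oj; apply: odd_local_cyclic (loc j) oj _; exact: gen_factor prod g j.
case=> H1 H2 H3; apply: gen_connected; apply: (suff_gen prod) => //.
- by move=> i ei; apply: connected_gen; apply: H2.
- move=> j oj w; have [p [n [pp op n0 [f [g fg gf]]]]] := H3 j oj.
  exists (f w : nat); apply: (can_inj fg); rewrite rmorph_nat.
  by rewrite natr_Zp.
Qed.
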